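(* Let $\phi:K\to[0,\infty)$ be a convex function attaining its minimum value at $0$, and assume $\phi$ is not constant. Then $\lim_{|x|\to\infty}\phi(x)=\infty$.
   Context: $K$ is a field complete with respect to a non-trivial non-archimedean absolute value, $B_K=\{x\in K:|x|\le1\}$. A function $\phi:K\to\mathbb R$ is convex if for all $n$, $x_1,\dots,x_n\in K$ and $\lambda_1,\dots,\lambda_n\in B_K$ with $\sum\lambda_i=1$ one has $\phi(\sum\lambda_ix_i)\le\max_i|\lambda_i|\phi(x_i)$. *)

(* Defs.v *)
From HB Require Import structures.
From mathcomp Require Import all_boot all_order all_algebra.
From mathcomp Require Import reals.
Set Implicit Arguments. Unset Strict Implicit. Unset Printing Implicit Defensive.
Import Order.TTheory GRing.Theory Num.Theory.
Local Open Scope ring_scope.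

Definition nonarch_abs (R : realType) (K : fieldType) (abs : K -> R) : Prop :=
  [/\ forall x, 0 <= abs x,
      forall x, abs x = 0 <-> x = 0,
      forall x y, abs (x * y) = abs x * abs y &
      forall x y, abs (x + y) <= Num.max (abs x) (abs y)].

Definition nontrivial_abs (R : realType) (K : fieldType) (abs : K -> R) : Prop :=
  exists x : K, x != 0 /\ abs x != 1.

Definition abs_complete (R : realType) (K : fieldType) (abs : K -> R) : Prop :=
  forall u : nat -> K,
    (forall e : R, 0 < e -> exists N : nat, forall m n : nat,
        (N <= m)%N -> (N <= n)%N -> abs (u m - u n) < e) ->
    exists l : K, forall e : R, 0 < e -> exists N : nat, forall n : nat,
        (N <= n)%N -> abs (u n - l) < e.

(* Convexity in the sense of the paper:
   for all n, x_1..x_n in K and lambda_1..lambda_n in B_K with sum 1,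
   phi (sum lambda_i x_i) <= max_i |lambda_i| phi(x_i).
   (Families are indexed by 'I_n.+1; n = 0 is vacuous since the sum must be 1.) *)
Definition convex_fun (R : realType) (K : fieldType) (abs : K -> R)
    (phi : K -> R) : Prop :=
  forall (n : nat) (x lam : 'I_n.+1 -> K),
    (forall i, abs (lam i) <= 1) ->
    \sum_(i < n.+1) lam i = 1 ->
    phi (\sum_(i < n.+1) lam i * x i)
      <= \big[Num.max/abs (lam ord0) * phi (x ord0)]_(i < n.+1)
           (abs (lam i) * phi (x i)).

(* Main.v *)
Require Import Defs.
From HB Require Import structures.
From mathcomp Require Import all_boot all_order all_algebra.
From mathcomp Require Import reals.
From mathcomp Require Import ring lra.
Import Order.TTheory GRing.Theory Num.Theory.
Local Open Scope ring_scope.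

Theorem mainTheorem9 (R : realType) (K : fieldType) (abs : K -> R)
    (habs : nonarch_abs abs) (hnt : nontrivial_abs abs) (hcomp : abs_complete abs)
    (phi : K -> R)
    (hpos : forall x, 0 <= phi x)
    (hconv : convex_fun abs phi)
    (hmin : forall x, phi 0 <= phi x)
    (hnc : exists x y, phi x != phi y) :
  forall M : R, exists r : R, forall x : K, r < abs x -> M < phi x.
Proof.
move=> M.
have [h0 h0iff hmul htri] := habs.
have [y hy] : exists y, phi 0 < phi y.
  case: hnc => x1 [x2 h12].
  case: (eqVneq (phi x1) (phi 0)) => e.
    exists x2; rewrite lt_neqAle hmin andbT; apply: contra h12 => /eqP e2; apply/eqP; rewrite e; by [rewrite e2 | rewrite -e2].
  exists x1; rewrite lt_neqAle hmin andbT; by [ | rewrite eq_sym].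
have ynz : y != 0 by apply/eqP => e; move: hy; rewrite e ltxx.
have absy : 0 < abs y.
  rewrite lt_neqAle h0 andbT eq_sym; apply/eqP => /h0iff e; by rewrite e eqxx in ynz.
have abs1 : abs 1 = 1.
  have n1 : abs 1 != 0 by apply/eqP => /h0iff/eqP; rewrite oner_eq0.
  apply: (mulfI n1); by rewrite -hmul !mulr1.
have absm1 : abs (-1) = 1.
  have e : abs (-1) * abs (-1) = 1 by rewrite -hmul mulrNN mulr1.
  have := h0 (-1); nra.
have absN : forall z, abs (- z) = abs z.
  by move=> z; rewrite -mulN1r hmul absm1 mul1r.
have key : forall x, x != 0 -> abs y <= abs x -> phi y * abs x <= abs y * phi x.
  move=> x xnz le.
  have absx : 0 < abs x.
    rewrite lt_neqAle h0 andbT eq_sym; apply/eqP => /h0iff e; by rewrite e eqxx in xnz.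
  set l := y / x.
  have absl : abs l = abs y / abs x.
    rewrite /l hmul; congr (_ * _).
    have : abs x * abs x^-1 = 1 by rewrite -hmul mulfV.
    move=> e; apply: (mulfI (lt0r_neq0 absx)); rewrite e mulfV //; exact: lt0r_neq0.
  have absl1 : abs l <= 1 by rewrite absl ler_pdivrMr // mul1r.
  have abs1l : abs (1 - l) <= 1.
    apply: le_trans (htri _ _) _; rewrite abs1 absN ge_max lexx; exact: absl1.
  pose lam := fun i : 'I_2 => if i == ord0 then l else 1 - l.
  pose xs := fun i : 'I_2 => if i == ord0 then x else 0.
  have := hconv 1%N xs lam.
  have Hl : forall i, abs (lam i) <= 1 by move=> i; rewrite /lam; case: (i == ord0).
  have Hs : \sum_(i < 2) lam i = 1 by rewrite !big_ord_recl big_ord0 /lam /=; ring.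
  move=> /(_ Hl Hs).
  rewrite !big_ord_recl !big_ord0 /lam /xs /= mulr0 addr0 /l mulfVK //.
  move=> H; rewrite addr0 in H.
  have H2 : phi y <= abs l * phi x.
    move: H; rewrite le_max => /orP [//|].
    rewrite le_max => /orP [] H.
      have : abs (1 - y / x) * phi 0 <= phi 0.
        have := hpos 0; rewrite /l in abs1l; nra.
      move: hy; rewrite /l; lra.
    exact: H.
  rewrite absl in H2.
  rewrite -(ler_pM2r absx) in H2.
  by move: H2; rewrite mulrAC divfK // lt0r_neq0.
have phiy : 0 < phi y by apply: le_lt_trans (hpos 0) hy.
exists (Num.max (abs y) (M * abs y / phi y)) => x.
rewrite gt_max => /andP [h1 h2].
have xnz : x != 0 by apply/eqP => e; move: h1; rewrite e; have := h0 y; move: (proj2 (h0iff 0) erefl) => ->; lra.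
have := key x xnz (ltW h1).
move: h2; rewrite ltr_pdivrMr // => h2 h3.
have : abs y * M < abs y * phi x by lra.
by rewrite ltr_pM2l.
Qed.
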